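(* Let $m,n\ge 1$. There exist a constant tensor $\mathbf W=(w_{ijk})\in\mathbb R^{m\times n\times mn}$ and a constant matrix $\mathbf Q\in\mathbb R^{n\times mn}$ such that for every entrywise non-negative matrix $\mathbf X=(x_{ij})\in\mathbb R_{\ge 0}^{m\times n}$ the following holds: defining $y_{ik}=\sum_{j=1}^n x_{ij}w_{ijk}$ for $i\in\{1,\dots,m\}$, $k\in\{1,\dots,mn\}$, and $\hat y_k=\max_{1\le i\le m}y_{ik}$, we have $$\Big(\sum_{i=1}^m x_{ij}\Big)_{j=1}^n=\mathbf Q\,(\hat y_k)_{k=1}^{mn}.$$
   Context: $\mathbf W$ and $\mathbf Q$ do not depend on $\mathbf X$; they depend only on $m$ and $n$. *)

(* Defs.v *)
From HB Require Import structures.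
From mathcomp Require Import all_boot all_order all_algebra.
Set Implicit Arguments. Unset Strict Implicit. Unset Printing Implicit Defensive.
Import Order.TTheory GRing.Theory Num.Theory.
Local Open Scope ring_scope.

(* Maximum over a nonempty ordinal range 'I_m (m > 0), seeded with the value
   at index 0 (Num.max is idempotent, so this is the true maximum). *)
Definition ordmax (R : realDomainType) (m : nat) (hm : (0 < m)%N)
  (F : 'I_m -> R) : R :=
  \big[Num.max/F (Ordinal hm)]_(i < m) F i.

(* Main.v *)
Require Import Defs.
From HB Require Import structures.
From mathcomp Require Import all_boot all_order all_algebra.
Import Order.TTheory GRing.Theory Num.Theory.
Local Open Scope ring_scope.

Lemma idx_inj (m n : nat) (i i' : 'I_m) (j j' : 'I_n) :
  mxvec_index i j = mxvec_index i' j' -> i = i' /\ j = j'.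
Proof.
rewrite /mxvec_index => /cast_ord_inj /enum_rank_inj [-> ->]; by [].
Qed.

Lemma le_bigmax_seed (R : realDomainType) (I : eqType) (r : seq I) (s : R)
  (F : I -> R) i : i \in r -> F i <= \big[Num.max/s]_(k <- r) F k.
Proof.
elim: r => // a r IH; rewrite inE big_cons => /orP[/eqP->|/IH H].
  by rewrite le_max lexx.
by rewrite le_max H orbT.
Qed.

Lemma ordmax_eq (R : realDomainType) (m : nat) (hm : (0 < m)%N)
  (F : 'I_m -> R) i : (forall k, F k <= F i) -> ordmax hm F = F i.
Proof.
move=> Hk; apply/eqP; rewrite eq_le; apply/andP; split.
  rewrite /ordmax; apply: (big_ind (fun v => v <= F i)) => //.
  by move=> x y hx hy; rewrite ge_max hx hy.
by apply: le_bigmax_seed; rewrite mem_index_enum.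
Qed.

Theorem proposition3 (R : realFieldType) (m n : nat)
  (hm : (0 < m)%N) (hn : (0 < n)%N) :
  exists (W : 'I_m -> 'I_n -> 'I_(m * n) -> R) (Q : 'M[R]_(n, m * n)),
  forall X : 'M[R]_(m, n),
    (forall i j, 0 <= X i j) ->
    let y := fun (i : 'I_m) (k : 'I_(m * n)) => \sum_(j < n) X i j * W i j k in
    let yhat : 'cV[R]_(m * n) := \col_k ordmax hm (fun i => y i k) in
    (\col_j \sum_(i < m) X i j) = Q *m yhat.
Proof.
exists (fun i j k => (k == mxvec_index i j)%:R).
exists (\matrix_(j, k) \sum_(i < m) (k == mxvec_index i j)%:R).
move=> X X0 y yhat.
have Hy : forall i j, yhat (mxvec_index i j) 0 = X i j.
  move=> i j; rewrite /yhat mxE.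
  have Hyv : forall i', y i' (mxvec_index i j) = if i' == i then X i j else 0.
    move=> i'; rewrite /y.
    case: eqP => [->|ne].
      rewrite (bigD1 j) //= eqxx mulr1 big1 ?addr0 // => j' /negbTE nj.
      case: eqP => [/idx_inj [_ E]|]; first by rewrite E eqxx in nj.
      by rewrite mulr0.
    rewrite big1 // => j' _; case: eqP => [/idx_inj [/esym H _]|]; first by [].
    by rewrite mulr0.
  rewrite (@ordmax_eq _ _ hm (fun i0 => y i0 (mxvec_index i j)) i) ?Hyv ?eqxx // => k.
  rewrite /= !Hyv; case: eqP => // _; exact: X0.
apply/matrixP => j z; rewrite !mxE (ord1 z).
under [RHS]eq_bigr => k _ do rewrite mxE big_distrl /=.
rewrite exchange_big /=; apply: eq_bigr => i _.
rewrite (bigD1 (mxvec_index i j)) //= eqxx mul1r Hy big1 ?addr0 // => k /negbTE ->.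
by rewrite mul0r.
Qed.
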